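(* Let $\mathsf{Prop}$ be a non-empty finite set of propositions and $\mathsf{L}$ any fragment of $\mathsf{LTL}_P(\mathsf{Prop})$. For every sample $\mathcal{S}=(\mathcal{P},\mathcal{N})$ of Kripke structures in $\mathcal{T}(\mathsf{Prop})$, if there is an $\mathcal{S}$-separating $\mathsf{L}$-formula, then there is one of size at most $2^{n+1}$, where $n:=\sum_{K\in\mathcal{P}\cup\mathcal{N}}|Q_K|$.
   Context: $\mathsf{LTL}$-formulas over $\mathsf{Prop}$ are interpreted on infinite words $w$ over $2^{\mathsf{Prop}}$: $w\models p$ iff $p\in w[0]$; Boolean connectives as usual; $w\models\mathbf{X}\varphi$ iff $w[1:]\models\varphi$; $w\models\mathbf{F}\varphi$ iff $\exists j$, $w[j:]\models\varphi$; $w\models\mathbf{G}\varphi$ iff $\forall j$, $w[j:]\models\varphi$; $w\models\varphi_1\mathbf{U}\varphi_2$ iff $\exists j$, $w[j:]\models\varphi_2$ and $\forall k<j$, $w[k:]\models\varphi_1$. $\mathsf{LTL}_P(\mathsf{Prop})$ is the two-sorted logic (both sorts final) with grammar $\varphi_P::=p\mid\neg\varphi_P\mid\varphi_P\wedge\varphi_P\mid\varphi_P\vee\varphi_P$ and $\varphi::=\varphi_P\mid\varphi\wedge\varphi\mid\varphi_P\vee\varphi\mid\mathbf{X}\varphi\mid\mathbf{G}\varphi\mid\mathbf{F}\varphi_P\mid\varphi\,\mathbf{U}\,\varphi_P$; its formulas are read as $\mathsf{LTL}$-formulas. Its operators are the propositions, the sort-$P$ operators $\neg,\wedge,\vee$,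 and the general-sort operators $\wedge$, $\vee$ (left argument of sort $P$), $\mathbf{X},\mathbf{G},\mathbf{F}$ (argument of sort $P$), $\mathbf{U}$ (right argument of sort $P$); every sort-$P$ formula may be used where a general-sort formula is expected. A fragment is obtained by allowing only a subset of these operators. $\mathsf{sz}(\varphi)$ is the number of distinct subformulas. $\mathcal{T}(\mathsf{Prop})$: Kripke structures $K=(Q,I,\delta,P,\pi)$ with $Q=Q_K$ finite non-empty, $I\subseteq Q$ non-empty, $\delta:Q\to2^Q$ with $\delta(q)\ne\emptyset$ for all $q$, $P\subseteq\mathsf{Prop}$, $\pi:Q\to2^P$. $\mathsf{Paths}(q)$: infinite $\rho\in q\cdot Q^\omega$ with $\rho[i+1]\in\delta(\rho[i])$, read as the word $\pi(\rho[0])\pi(\rho[1])\cdots$. A state $q$ satisfies $\varphi$ if all $\rho\in\mathsf{Paths}(q)$ satisfy $\varphi$; $K\models\varphi$ if all $q\in I$ satisfy $\varphi$. A sample is a pair of finite sets of such structures; a formula is $\mathcal{S}$-separating if satisfied by all structures in $\mathcal{P}$ and by none in $\mathcal{N}$. *)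

(* Defs.v *)
From HB Require Import structures.
From mathcomp Require Import all_boot.
From Stdlib Require List.
Set Implicit Arguments.
Unset Strict Implicit.
Unset Printing Implicit Defensive.

Section LTL.
Variable AP : finType.

Inductive ltl : Type :=
| Atom of AP
| Neg of ltl
| And of ltl & ltl
| Or of ltl & ltl
| Next of ltl
| Glob of ltl
| Fut of ltl
| Until of ltl & ltl.

Fixpoint ltl_eqb (f g : ltl) : bool :=
  match f, g with
  | Atom p, Atom q => p == q
  | Neg f1, Neg g1 => ltl_eqb f1 g1
  | And f1 f2, And g1 g2 => ltl_eqb f1 g1 && ltl_eqb f2 g2
  | Or f1 f2, Or g1 g2 => ltl_eqb f1 g1 && ltl_eqb f2 g2
  | Next f1, Next g1 => ltl_eqb f1 g1
  | Glob f1, Glob g1 => ltl_eqb f1 g1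
  | Fut f1, Fut g1 => ltl_eqb f1 g1
  | Until f1 f2, Until g1 g2 => ltl_eqb f1 g1 && ltl_eqb f2 g2
  | _, _ => false
  end.

Lemma ltl_eqP : Equality.axiom ltl_eqb.
Proof.
elim=> [p|f IH|f IHf g IHg|f IHf g IHg|f IH|f IH|f IH|f IHf g IHg] [q|f'|f' g'|f' g'|f'|f'|f'|f' g'] /=;
  try by constructor.
- by apply: (iffP eqP) => [->|[]].
- by apply: (iffP (IH f')) => [->|[]].
- by apply: (iffP andP) => [[/IHf -> /IHg ->]|[<- <-]]; split; [apply/IHf|apply/IHg].
- by apply: (iffP andP) => [[/IHf -> /IHg ->]|[<- <-]]; split; [apply/IHf|apply/IHg].
- by apply: (iffP (IH f')) => [->|[]].
- by apply: (iffP (IH f')) => [->|[]].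
- by apply: (iffP (IH f')) => [->|[]].
- by apply: (iffP andP) => [[/IHf -> /IHg ->]|[<- <-]]; split; [apply/IHf|apply/IHg].
Qed.

HB.instance Definition _ := hasDecEq.Build ltl ltl_eqP.

Definition word := nat -> {set AP}.
Definition suffix (w : word) (j : nat) : word := fun i => w (j + i).

Fixpoint sat (w : word) (f : ltl) : Prop :=
  match f with
  | Atom p => p \in w 0
  | Neg f1 => ~ sat w f1
  | And f1 f2 => sat w f1 /\ sat w f2
  | Or f1 f2 => sat w f1 \/ sat w f2
  | Next f1 => sat (suffix w 1) f1
  | Fut f1 => exists j, sat (suffix w j) f1
  | Glob f1 => forall j, sat (suffix w j) f1
  | Until f1 f2 => exists j, sat (suffix w j) f2 /\
                     forall k, k < j -> sat (suffix w k) f1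
  end.

Fixpoint subformulas (f : ltl) : seq ltl :=
  f :: match f with
       | Atom _ => [::]
       | Neg f1 | Next f1 | Glob f1 | Fut f1 => subformulas f1
       | And f1 f2 | Or f1 f2 | Until f1 f2 => subformulas f1 ++ subformulas f2
       end.

Definition sz (f : ltl) : nat := size (undup (subformulas f)).

Inductive op : Type :=
| OAtom of AP
| PNeg
| PAnd
| POr
| GAnd
| GOr
| GNext
| GGlob
| GFut
| GUntil.

(* A fragment is given by a set of allowed operators L.
   inP L f : f is derivable as a sort-P formula using operators of L.
   inG L f : f is derivable as a general-sort formula using operators of L. *)
Inductive inP (L : op -> Prop) : ltl -> Prop :=
| inP_atom p : L (OAtom p) -> inP L (Atom p)
| inP_neg f : L PNeg -> inP L f -> inP L (Neg f)
| inP_and f g : L PAnd -> inP L f -> inP L g -> inP L (And f g)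
| inP_or f g : L POr -> inP L f -> inP L g -> inP L (Or f g).

Inductive inG (L : op -> Prop) : ltl -> Prop :=
| inG_P f : inP L f -> inG L f
| inG_and f g : L GAnd -> inG L f -> inG L g -> inG L (And f g)
| inG_or f g : L GOr -> inP L f -> inG L g -> inG L (Or f g)
| inG_next f : L GNext -> inG L f -> inG L (Next f)
| inG_glob f : L GGlob -> inG L f -> inG L (Glob f)
| inG_fut f : L GFut -> inP L f -> inG L (Fut f)
| inG_until f g : L GUntil -> inG L f -> inP L g -> inG L (Until f g).

(* L-formula: formula of either sort (both final); every sort-P formula
   is a general-sort formula via inG_P. *)
Definition in_fragment (L : op -> Prop) (f : ltl) : Prop := inG L f.

Record kripke : Type := Kripke {
  KQ : finType;
  KI : {set KQ};
  Kdelta : KQ -> {set KQ};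
  KP : {set AP};
  Kpi : KQ -> {set AP};
  KI_ne : KI != set0;
  Kdelta_ne : forall q, Kdelta q != set0;
  Kpi_sub : forall q, Kpi q \subset KP
}.

Definition is_path (K : kripke) (q : KQ K) (rho : nat -> KQ K) : Prop :=
  rho 0 = q /\ forall i, rho i.+1 \in Kdelta (rho i).

Definition path_word (K : kripke) (rho : nat -> KQ K) : word :=
  fun i => Kpi (rho i).

Definition state_sat (K : kripke) (q : KQ K) (f : ltl) : Prop :=
  forall rho, is_path q rho -> sat (path_word rho) f.

Definition kripke_sat (K : kripke) (f : ltl) : Prop :=
  forall q, q \in KI K -> state_sat q f.

(* A sample is a pair of finite sets of structures (given as duplicate-free lists). *)
Definition separating (Pos Neg : seq kripke) (f : ltl) : Prop :=
  (forall K, List.In K Pos -> kripke_sat K f) /\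
  (forall K, List.In K Neg -> ~ kripke_sat K f).

End LTL.

(* Main.v *)
Require Import Defs.
From mathcomp Require Import all_boot.
From Stdlib Require List.
From Stdlib Require Import Classical ClassicalEpsilon.
Set Implicit Arguments.
Unset Strict Implicit.
Unset Printing Implicit Defensive.

Section Sem.
Variable AP : finType.
Implicit Types (f g : ltl AP) (w : word AP).

Fixpoint peval (s : {set AP}) (f : ltl AP) : bool :=
  match f with
  | Atom p => p \in s
  | Neg f1 => ~~ peval s f1
  | And f1 f2 => peval s f1 && peval s f2
  | Or f1 f2 => peval s f1 || peval s f2
  | _ => false
  end.

Lemma sat_peval (L : op AP -> Prop) f : inP L f -> forall w, sat w f <-> peval (w 0) f.
Proof.
elim=> {f} /=.
- by [].
- move=> f _ _ IH w; rewrite IH; exact: (rwP negP).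
- move=> f g _ _ IHf _ IHg w; rewrite IHf IHg; exact: (rwP andP).
- move=> f g _ _ IHf _ IHg w; rewrite IHf IHg; exact: (rwP orP).
Qed.

Lemma sat_ext f : forall w w', (forall i, w i = w' i) -> (sat w f <-> sat w' f).
Proof.
elim: f => /=.
- by move=> p w w' e; rewrite e.
- by move=> f IH w w' e; rewrite (IH w w').
- by move=> f IHf g IHg w w' e; rewrite (IHf w w') // (IHg w w').
- by move=> f IHf g IHg w w' e; rewrite (IHf w w') // (IHg w w').
- by move=> f IH w w' e; apply: IH => i; apply: e.
- move=> f IH w w' e; split=> H j.
  + by rewrite -(IH (Defs.suffix w j)) // => i; apply: e.
  + by rewrite (IH _ (Defs.suffix w' j)) // => i; apply: e.
- move=> f IH w w' e; split=> -[j H]; exists j.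
  + by rewrite -(IH (Defs.suffix w j)) // => i; apply: e.
  + by rewrite (IH _ (Defs.suffix w' j)) // => i; apply: e.
- move=> f IHf g IHg w w' e; split=> -[j [H1 H2]]; exists j; split.
  + by rewrite -(IHg (Defs.suffix w j)) // => i; apply: e.
  + move=> k hk; rewrite -(IHf (Defs.suffix w k)); [exact: H2 | move=> i; apply: e].
  + by rewrite (IHg _ (Defs.suffix w' j)) // => i; apply: e.
  + move=> k hk; rewrite (IHf _ (Defs.suffix w' k)); [exact: H2 | move=> i; apply: e].
Qed.

Variable K : kripke AP.

Definition shift (rho : nat -> KQ K) j : nat -> KQ K := fun i => rho (j + i).

Lemma shift_path q rho j : is_path q rho -> is_path (rho j) (shift rho j).
Proof.
move=> [_ H]; split; first by rewrite /shift addn0.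
by move=> i; rewrite /shift addnS; apply: H.
Qed.

Definition splice (rho pi : nat -> KQ K) j : nat -> KQ K :=
  fun i => if i < j then rho i else pi (i - j).

Lemma splice_path q rho pi j : is_path q rho -> is_path (rho j) pi ->
  is_path q (splice rho pi j).
Proof.
move=> [H0 H] [P0 P]; split.
  rewrite /splice; case: j P0 => [|j] P0 /=; by rewrite ?P0.
move=> i; rewrite /splice.
case: (ltngtP i.+1 j) => h.
- by apply: H.
- by rewrite subSn //; apply: P.
- by rewrite -h subnn P0 -h; apply: H.
Qed.

Lemma splice_shift rho pi j i : shift (splice rho pi j) j i = pi i.
Proof. by rewrite /shift /splice ltnNge leq_addr /= addKn. Qed.

Lemma path_exists (q : KQ K) : exists rho, is_path q rho.
Proof.
pose nx (x : KQ K) := odflt x [pick y in Kdelta x].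
have Hnx x : nx x \in Kdelta x.
  rewrite /nx; case: pickP => [y -> //|H].
  by case/set0Pn: (Kdelta_ne x) => y; rewrite H.
exists (fun i => iter i nx q); split => // i.
by rewrite iterS; apply: Hnx.
Qed.

Lemma state_sat_P (L : op AP -> Prop) f (q : KQ K) : inP L f ->
  (state_sat q f <-> peval (Kpi q) f).
Proof.
move=> hf; split.
- case: (path_exists q) => rho hr H.
  by have := H rho hr; rewrite (sat_peval hf) /path_word; case: hr => ->.
- move=> h rho [h0 _]; by rewrite (sat_peval hf) /path_word h0.
Qed.

Lemma all_suffix (q : KQ K) j f :
  (forall rho, is_path q rho -> sat (Defs.suffix (path_word rho) j) f) <->
  (forall rho, is_path q rho -> state_sat (rho j) f).
Proof.
split=> H rho hr.
- move=> pi hp; have := H _ (splice_path hr hp).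
  have E : forall i, Defs.suffix (path_word (splice rho pi j)) j i = path_word pi i.
    by move=> i; rewrite /Defs.suffix /path_word -/(shift _ _ i) splice_shift.
  by move/(sat_ext f E).
- exact: (H rho hr _ (shift_path j hr)).
Qed.


Definition EK f g := forall q : KQ K, state_sat q f <-> state_sat q g.
Definition EP f g := forall q : KQ K, peval (Kpi q) f = peval (Kpi q) g.

Lemma EK_EP (L : op AP -> Prop) a b : inP L a -> inP L b -> (EK a b <-> EP a b).
Proof.
move=> ha hb; split=> H q.
- apply/idP/idP => h.
  + by apply/(state_sat_P q hb); apply/H; apply/(state_sat_P q ha).
  + by apply/(state_sat_P q ha); apply/H; apply/(state_sat_P q hb).
- by rewrite (state_sat_P q ha) (state_sat_P q hb) H.
Qed.

Lemma EK_and a a' b b' : EK a a' -> EK b b' -> EK (And a b) (And a' b').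
Proof.
move=> Ha Hb q.
have E x y (q' : KQ K) : state_sat q' (And x y) <-> state_sat q' x /\ state_sat q' y.
  split=> [H|[H1 H2] rho hr]; last by split; [apply: H1|apply: H2].
  by split=> rho hr; case: (H rho hr).
by rewrite !E Ha Hb.
Qed.

Lemma state_sat_or (L : op AP -> Prop) a b (q : KQ K) : inP L a ->
  (state_sat q (Or a b) <-> peval (Kpi q) a \/ state_sat q b).
Proof.
move=> ha; split.
- move=> H; case: (boolP (peval (Kpi q) a)) => hp; [by left|right].
  move=> rho hr.
  have [h|//] : sat (path_word rho) a \/ sat (path_word rho) b by exact: H rho hr.
  by move: h; rewrite (sat_peval ha) /path_word; case: hr => -> _; rewrite (negbTE hp).
- move=> [h|h] rho hr /=.
  + by left; rewrite (sat_peval ha) /path_word; case: hr => ->.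
  + by right; apply: h.
Qed.

Lemma EK_or (L : op AP -> Prop) a a' b b' : inP L a -> inP L a' -> EP a a' -> EK b b' ->
  EK (Or a b) (Or a' b').
Proof.
move=> ha ha' Ha Hb q.
by rewrite (state_sat_or _ _ ha) (state_sat_or _ _ ha') Ha Hb.
Qed.

Lemma EK_next a a' : EK a a' -> EK (Next a) (Next a').
Proof.
move=> Ha q.
have E x : state_sat q (Next x) <-> (forall rho, is_path q rho -> state_sat (rho 1) x).
  exact: (all_suffix q 1 x).
rewrite !E; split=> H rho hr; [apply/Ha|apply/Ha]; exact: H.
Qed.

Lemma EK_glob a a' : EK a a' -> EK (Glob a) (Glob a').
Proof.
move=> Ha q.
have E x : state_sat q (Glob x) <-> (forall j rho, is_path q rho -> state_sat (rho j) x).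
  split=> H.
  - by move=> j; apply/(all_suffix q j x) => rho hr; apply: H.
  - by move=> rho hr j; apply: (proj2 (all_suffix q j x) (H j)).
rewrite !E; split=> H j rho hr; [apply/Ha|apply/Ha]; exact: H.
Qed.

Lemma EK_fut (L : op AP -> Prop) a a' : inP L a -> inP L a' -> EP a a' -> EK (Fut a) (Fut a').
Proof.
move=> ha ha' Ha q; split=> H rho hr; case: (H rho hr) => j.
- move/(sat_peval ha) => hj; exists j; apply/(sat_peval ha').
  by move: hj; rewrite /Defs.suffix /path_word Ha.
- move/(sat_peval ha') => hj; exists j; apply/(sat_peval ha).
  by move: hj; rewrite /Defs.suffix /path_word Ha.
Qed.

Lemma state_sat_until (L : op AP -> Prop) a b (q : KQ K) : inP L b ->
  (state_sat q (Until a b) <-> forall rho, is_path q rho ->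
     exists j, peval (Kpi (rho j)) b /\ forall k, k < j -> state_sat (rho k) a).
Proof.
move=> hb; split.
- move=> H rho hr.
  have ex : exists j, peval (Kpi (rho j)) b.
    case: (H rho hr) => j [/(sat_peval hb) hj _]; exists j.
    by move: hj; rewrite /Defs.suffix /path_word addn0.
  exists (ex_minn ex); case: ex_minnP => j0 hj0 hmin; split => // k hk pi hp.
  have := H _ (splice_path hr hp) => -[j' [/(sat_peval hb) hj' hk']].
  move: hj'; rewrite /Defs.suffix /path_word addn0 => hj'.
  have Hjk : k < j'.
    rewrite ltnNge; apply/negP => hle.
    move: hj'; rewrite /splice.
    case: ltnP => h1 hj'.
    * by have := hmin _ hj'; rewrite leqNgt (leq_trans h1 (ltnW hk)).
    * have ej : j' = k by apply/eqP; rewrite eqn_leq hle h1.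
      move: hj'; rewrite ej subnn; case: hp => -> _ hj'.
      by have := hmin _ hj'; rewrite leqNgt hk.
  have := hk' k Hjk.
  have E : forall i, Defs.suffix (path_word (splice rho pi k)) k i = path_word pi i.
    by move=> i; rewrite /Defs.suffix /path_word -/(shift _ _ i) splice_shift.
  by move/(sat_ext a E).
- move=> H rho hr; case: (H rho hr) => j [hj hk]; exists j; split.
  + by rewrite (sat_peval hb) /Defs.suffix /path_word addn0.
  + by move=> k lk; apply: (hk k lk _ (shift_path k hr)).
Qed.

Lemma EK_until (L : op AP -> Prop) a a' b b' : inP L b -> inP L b' -> EK a a' -> EP b b' ->
  EK (Until a b) (Until a' b').
Proof.
move=> hb hb' Ha Hb q; rewrite (state_sat_until _ _ hb) (state_sat_until _ _ hb').
split=> H rho hr; case: (H rho hr) => j [h1 h2]; exists j; split.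
- by rewrite -Hb.
- by move=> k lk; apply/Ha; apply: h2.
- by rewrite Hb.
- by move=> k lk; apply/Ha; apply: h2.
Qed.

End Sem.


Definition pr (a b : nat) := 2 ^ a * 3 ^ b.

Lemma pr_inj a b c d : pr a b = pr c d -> a = c /\ b = d.
Proof.
rewrite /pr => e.
have l2 x y : logn 2 (2 ^ x * 3 ^ y) = x.
  rewrite lognM ?expn_gt0 // pfactorK // lognX.
  by rewrite (_ : logn 2 3 = 0) ?muln0 ?addn0 //.
have l3 x y : logn 3 (2 ^ x * 3 ^ y) = y.
  rewrite lognM ?expn_gt0 // pfactorK // lognX.
  by rewrite (_ : logn 3 2 = 0) ?muln0 //.
by split; [rewrite -(l2 a b) e l2 | rewrite -(l3 a b) e l3].
Qed.

Lemma pr_monol a a' b : a < a' -> pr a b < pr a' b.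
Proof. by move=> h; rewrite /pr ltn_pmul2r ?expn_gt0 // ltn_exp2l. Qed.
Lemma pr_monor a b b' : b < b' -> pr a b < pr a b'.
Proof. by move=> h; rewrite /pr ltn_pmul2l ?expn_gt0 // ltn_exp2l. Qed.

Section Code.
Variable AP : finType.
Fixpoint code (f : ltl AP) : nat :=
  match f with
  | Atom p => pr 0 (enum_rank p)
  | Neg f1 => pr 1 (code f1)
  | And f1 f2 => pr 2 (pr (code f1) (code f2))
  | Or f1 f2 => pr 3 (pr (code f1) (code f2))
  | Next f1 => pr 4 (code f1)
  | Glob f1 => pr 5 (code f1)
  | Fut f1 => pr 6 (code f1)
  | Until f1 f2 => pr 7 (pr (code f1) (code f2))
  end.

Lemma code_inj : injective code.
Proof.
elim=> [p|f IH|f IHf g IHg|f IHf g IHg|f IH|f IH|f IH|f IHf g IHg]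
  [p'|f'|f' g'|f' g'|f'|f'|f'|f' g'] /= /pr_inj [] //.
- by move=> _ /val_inj/enum_rank_inj ->.
- by move=> _ /IH ->.
- by move=> _ /pr_inj [/IHf -> /IHg ->].
- by move=> _ /pr_inj [/IHf -> /IHg ->].
- by move=> _ /IH ->.
- by move=> _ /IH ->.
- by move=> _ /IH ->.
- by move=> _ /pr_inj [/IHf -> /IHg ->].
Qed.
End Code.


Section Repl.
Variable AP : finType.
Variable L : op AP -> Prop.
Variable S : seq (kripke AP).

Definition E (f f' : ltl AP) := forall K, List.In K S -> EK K f f'.

Lemma EK_refl (K : kripke AP) f : EK K f f.
Proof. by []. Qed.

Lemma subP_closed f : inP L f -> forall s, s \in subformulas f -> inP L s.
Proof.
elim=> {f} /=.
- by move=> p hp s; rewrite inE => /eqP ->; constructor.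
- move=> f hl hf IH s; rewrite in_cons => /orP [/eqP ->|/IH //]; by constructor.
- move=> f g hl hf IHf hg IHg s; rewrite in_cons mem_cat => /orP [/eqP ->|/orP [/IHf|/IHg] //];
  by constructor.
- move=> f g hl hf IHf hg IHg s; rewrite in_cons mem_cat => /orP [/eqP ->|/orP [/IHf|/IHg] //];
  by constructor.
Qed.

Lemma subG_closed f : inG L f -> forall s, s \in subformulas f -> inG L s.
Proof.
elim=> {f} /=.
- by move=> f hf s /(subP_closed hf) h; constructor.
- move=> f g hl hf IHf hg IHg s; rewrite in_cons mem_cat => /orP [/eqP ->|/orP [/IHf|/IHg] //];
  by constructor.
- move=> f g hl hf hg IHg s; rewrite in_cons mem_cat => /orP [/eqP ->|/orP [/(subP_closed hf) h|/IHg] //];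
  by constructor.
- move=> f hl hf IH s; rewrite in_cons => /orP [/eqP ->|/IH //]; by constructor.
- move=> f hl hf IH s; rewrite in_cons => /orP [/eqP ->|/IH //]; by constructor.
- move=> f hl hf s; rewrite in_cons => /orP [/eqP ->|/(subP_closed hf) h]; by constructor.
- move=> f g hl hf IHf hg s; rewrite in_cons mem_cat => /orP [/eqP ->|/orP [/IHf|/(subP_closed hg) h] //];
  by constructor.
Qed.

Variables g h : ltl AP.
Hypothesis Egh : E g h.
Hypothesis Pgh : inP L g -> inP L h.
Hypothesis Gh : inG L h.
Hypothesis Cgh : code h < code g.

Lemma E_P a a' : inP L a -> inP L a' -> E a a' -> forall K, List.In K S -> EP K a a'.
Proof. by move=> ha ha' H K hK; apply/(EK_EP _ ha ha'); apply: H. Qed.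

Lemma EP_E a a' : inP L a -> inP L a' -> (forall K, List.In K S -> EP K a a') -> E a a'.
Proof. by move=> ha ha' H K hK; apply/(EK_EP _ ha ha'); apply: H. Qed.

Lemma repl_P f : inP L f -> g \in subformulas f ->
  exists f', inP L f' /\ E f f' /\ code f' < code f.
Proof.
move=> hf; elim: hf => {f}.
- move=> p hp /=; rewrite inE => /eqP e; subst g.
  by exists h; split; [apply: Pgh; constructor|].
- move=> f hl hf IH /=; rewrite in_cons => /orP [/eqP e|hs].
    by subst g; exists h; split; [apply: Pgh; constructor|].
  have [f' [hf' [Ef Cf]]] := IH hs.
  exists (Neg f'); split; first by constructor.
  split; last by apply: pr_monor.
  apply: EP_E; try by constructor.
  by move=> K hK q /=; rewrite (E_P hf hf' Ef hK).
- move=> f1 f2 hl hf1 IH1 hf2 IH2 /=; rewrite in_cons mem_cat => /orP [/eqP e|/orP [hs|hs]].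
  + by subst g; exists h; split; [apply: Pgh; constructor|].
  + have [f' [hf' [Ef Cf]]] := IH1 hs.
    exists (And f' f2); split; first by constructor.
    split; last by apply/pr_monor/pr_monol.
    by move=> K hK; apply: EK_and; [apply: Ef|apply: EK_refl].
  + have [f' [hf' [Ef Cf]]] := IH2 hs.
    exists (And f1 f'); split; first by constructor.
    split; last by apply/pr_monor/pr_monor.
    by move=> K hK; apply: EK_and; [apply: EK_refl|apply: Ef].
- move=> f1 f2 hl hf1 IH1 hf2 IH2 /=; rewrite in_cons mem_cat => /orP [/eqP e|/orP [hs|hs]].
  + by subst g; exists h; split; [apply: Pgh; constructor|].
  + have [f' [hf' [Ef Cf]]] := IH1 hs.
    exists (Or f' f2); split; first by constructor.
    split; last by apply/pr_monor/pr_monol.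
    apply: EP_E; try by constructor.
    by move=> K hK q /=; rewrite (E_P hf1 hf' Ef hK).
  + have [f' [hf' [Ef Cf]]] := IH2 hs.
    exists (Or f1 f'); split; first by constructor.
    split; last by apply/pr_monor/pr_monor.
    apply: EP_E; try by constructor.
    by move=> K hK q /=; rewrite (E_P hf2 hf' Ef hK).
Qed.

Lemma repl_G f : inG L f -> g \in subformulas f ->
  exists f', inG L f' /\ E f f' /\ code f' < code f.
Proof.
move=> hf; elim: hf => {f}.
- move=> f hf /(repl_P hf) [f' [hf' [Ef Cf]]].
  by exists f'; split => //; constructor.
- move=> f1 f2 hl hf1 IH1 hf2 IH2 /=; rewrite in_cons mem_cat => /orP [/eqP e|/orP [hs|hs]].
  + by subst g; exists h.
  + have [f' [hf' [Ef Cf]]] := IH1 hs.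
    exists (And f' f2); split; first by constructor.
    split; last by apply/pr_monor/pr_monol.
    by move=> K hK; apply: EK_and; [apply: Ef|apply: EK_refl].
  + have [f' [hf' [Ef Cf]]] := IH2 hs.
    exists (And f1 f'); split; first by constructor.
    split; last by apply/pr_monor/pr_monor.
    by move=> K hK; apply: EK_and; [apply: EK_refl|apply: Ef].
- move=> f1 f2 hl hf1 hf2 IH2 /=; rewrite in_cons mem_cat => /orP [/eqP e|/orP [hs|hs]].
  + by subst g; exists h.
  + have [f' [hf' [Ef Cf]]] := repl_P hf1 hs.
    exists (Or f' f2); split; first by constructor.
    split; last by apply/pr_monor/pr_monol.
    move=> K hK; apply: (EK_or hf1 hf'); [exact: E_P hf1 hf' Ef K hK|apply: EK_refl].
  + have [f' [hf' [Ef Cf]]] := IH2 hs.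
    exists (Or f1 f'); split; first by constructor.
    split; last by apply/pr_monor/pr_monor.
    move=> K hK; apply: (EK_or hf1 hf1); [by []|exact: Ef].
- move=> f hl hf IH /=; rewrite in_cons => /orP [/eqP e|hs].
    by subst g; exists h.
  have [f' [hf' [Ef Cf]]] := IH hs.
  exists (Next f'); split; first by constructor.
  split; last by apply: pr_monor.
  by move=> K hK; apply: EK_next; apply: Ef.
- move=> f hl hf IH /=; rewrite in_cons => /orP [/eqP e|hs].
    by subst g; exists h.
  have [f' [hf' [Ef Cf]]] := IH hs.
  exists (Glob f'); split; first by constructor.
  split; last by apply: pr_monor.
  by move=> K hK; apply: EK_glob; apply: Ef.
- move=> f hl hf /=; rewrite in_cons => /orP [/eqP e|hs].
    by subst g; exists h.
  have [f' [hf' [Ef Cf]]] := repl_P hf hs.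
  exists (Fut f'); split; first by constructor.
  split; last by apply: pr_monor.
  by move=> K hK; apply: (EK_fut hf hf'); exact: E_P hf hf' Ef K hK.
- move=> f1 f2 hl hf1 IH1 hf2 /=; rewrite in_cons mem_cat => /orP [/eqP e|/orP [hs|hs]].
  + by subst g; exists h.
  + have [f' [hf' [Ef Cf]]] := IH1 hs.
    exists (Until f' f2); split; first by constructor.
    split; last by apply/pr_monor/pr_monol.
    by move=> K hK; apply: (EK_until hf2 hf2); [apply: Ef|].
  + have [f' [hf' [Ef Cf]]] := repl_P hf2 hs.
    exists (Until f1 f'); split; first by constructor.
    split; last by apply/pr_monor/pr_monor.
    move=> K hK; apply: (EK_until hf2 hf'); [apply: EK_refl|exact: E_P hf2 hf' Ef K hK].
Qed.

End Repl.


Definition pb (P : Prop) : bool := if excluded_middle_informative P then true else false.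
Lemma pbE P : pb P <-> P.
Proof. by rewrite /pb; case: excluded_middle_informative. Qed.

Lemma In_tnth (T : Type) (K0 : T) (S : seq T) (K : T) : List.In K S ->
  exists i : 'I_(size S), nth K0 S i = K.
Proof.
move=> hK; suff : exists n, n < size S /\ nth K S n = K.
  by case=> n [hn e]; exists (Ordinal hn); rewrite /= (set_nth_default K).
elim: S hK => //= a S IH [->|/IH [n [hn e]]]; first by exists 0.
by exists n.+1.
Qed.

Section Main.
Variable AP : finType.

Definition K0 : kripke AP.
refine (@Kripke AP unit setT (fun _ => setT) set0 (fun _ => set0) _ _ _).
- by apply/set0Pn; exists tt; rewrite inE.
- by move=> q; apply/set0Pn; exists tt; rewrite inE.
- by move=> q; rewrite sub0set.
Defined.

Variable L : op AP -> Prop.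
Variable S : seq (kripke AP).

Definition St := {i : 'I_(size S) & KQ (nth K0 S i)}.
Definition sem (f : ltl AP) : {ffun St -> bool} :=
  [ffun st => pb (state_sat (tagged st) f)].
Definition key (f : ltl AP) := (sem f, pb (inP L f)).

Lemma card_key : #|{: {ffun St -> bool} * bool}| = 2 ^ (\sum_(K <- S) #|KQ K|).+1.
Proof.
rewrite card_prod card_ffun card_bool expnS mulnC; congr (_ * (2 ^ _)).
rewrite card_tagged sumnE big_map big_enum /= (big_nth K0) big_mkord.
by apply: eq_bigl => i; rewrite inE.
Qed.

Lemma key_E f f' : key f = key f' -> E S f f' /\ (inP L f <-> inP L f').
Proof.
move=> e; have /= es := congr1 fst e; have /= ep := congr1 snd e; split; last by rewrite -(pbE (inP L f)) ep pbE.
move=> K /(In_tnth K0) [i ei]; subst K => q.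
have := congr1 (fun F : {ffun St -> bool} => F (existT (fun i : 'I_(size S) => KQ (nth K0 S i)) i q : St)) es.
rewrite !ffunE /= => e'; by rewrite -(pbE (state_sat q f)) e' pbE.
Qed.

End Main.

Lemma sep_E (AP : finType) (Pos Neg : seq (kripke AP)) f f' :
  E (Pos ++ Neg) f f' -> separating Pos Neg f -> separating Pos Neg f'.
Proof.
move=> Ef [hP hN].
have kE K : List.In K (Pos ++ Neg) -> kripke_sat K f <-> kripke_sat K f'.
  move=> hK; split=> H q hq; apply/(Ef K hK); exact: H.
split.
- move=> K hK; apply/kE; [apply: List.in_or_app; left|apply: hP] => //.
- move=> K hK; rewrite -kE; [exact: hN|apply: List.in_or_app; right => //].
Qed.

Theorem corollary3 (AP : finType) (AP_ne : 0 < #|AP|)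
  (L : op AP -> Prop) (Pos Neg : seq (kripke AP)) :
  List.NoDup Pos -> List.NoDup Neg ->
  (exists f, in_fragment L f /\ separating Pos Neg f) ->
  exists f, in_fragment L f /\ separating Pos Neg f /\
    sz f <= 2 ^ (\sum_(K <- Pos ++ Neg) #|KQ K|).+1.
Proof.
move=> _ _ [f0 [hf0 hs0]].
set S := Pos ++ Neg.
suff H : forall m f, code f < m -> inG L f -> separating Pos Neg f ->
  exists f, in_fragment L f /\ separating Pos Neg f /\
    sz f <= 2 ^ (\sum_(K <- S) #|KQ K|).+1.
  exact: (H (code f0).+1 f0).
elim=> [//|m IH] f hm hf hsep.
apply: NNPP => Hno.
have Hinj : {in undup (subformulas f) &, injective (key L S)}.
  move=> x y; rewrite !mem_undup => hx hy hk; apply: NNPP => hne.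
  have [Exy Pxy] := key_E hk.
  have Gx := subG_closed hf hx.
  have Gy := subG_closed hf hy.
  case: (ltngtP (code x) (code y)) => c.
  - have Eyx : E S y x by move=> K hK q; split=> h; apply/(Exy K hK).
    have [f' [hf' [Ef Cf]]] := repl_G Eyx (fun h => proj2 Pxy h) Gx c hf hy.
    apply: Hno; apply: (IH f') => //; first by apply: leq_trans Cf _.
    exact: sep_E Ef hsep.
  - have [f' [hf' [Ef Cf]]] := repl_G Exy (fun h => proj1 Pxy h) Gy c hf hx.
    apply: Hno; apply: (IH f') => //; first by apply: leq_trans Cf _.
    exact: sep_E Ef hsep.
  - by apply: hne; apply: code_inj.
apply: Hno; exists f; split => //; split => //.
rewrite /sz -(size_map (key L S)) -card_key.
have U : uniq (map (key L S) (undup (subformulas f))).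
  by rewrite (map_inj_in_uniq Hinj) undup_uniq.
by rewrite -(card_uniqP U); apply: max_card.
Qed.
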